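(* A map in $p\mathsf{Ch}^*_\mathbb{Q}$ has the right lifting property with respect to all maps in $\mathbb{I}$ if and only if it has the right lifting property with respect to all maps in $\mathbb{J}$ and belongs to $\mathbb{W}$.
   Context: $p\mathsf{Ch}^*_\mathbb{Q}=\mathsf{Fun}([0,\infty),\mathsf{Ch}^*_\mathbb{Q})$, non-negatively graded rational cochain complexes. $S^k=\mathbb{Q}$ in degree $k$; $D^k$ ($k\ge1$) is $\mathbb{Q}$ in degrees $k-1,k$ with identity differential; $D^0=0$. For $0\le s<t<\infty$, $\mathbb{S}^k_{[s,t)}$ is $0$ at $r<s$, $S^k$ at $s\le r<t$, $D^k$ at $r\ge t$; $\mathbb{S}^k_{[s,\infty)}$ is $0$ at $r<s$, $S^k$ at $r\ge s$; $\mathbb{D}^k_s$ is $0$ at $r<s$, $D^k$ at $r\ge s$. $\mathbb{I}=\{\mathbb{S}^k_{[s,t)}\to\mathbb{D}^k_s: k\in\mathbb{N},\ 0\le s<t\le\infty\}$, $\mathbb{J}=\{\mathbb{D}^k_t\to\mathbb{D}^k_s: 0\le s<t<\infty\}\cup\{0\to\mathbb{D}^k_s: 0\le s<\infty\}$. $\mathbb{W}$ is the class of maps that are quasi-isomorphisms at each $r\in[0,\infty)$. *)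

(* Defs.v *)
From Stdlib Require Import Reals.
From HB Require Import structures.
From mathcomp Require Import all_boot all_order all_algebra.
Set Implicit Arguments. Unset Strict Implicit. Unset Printing Implicit Defensive.
Import GRing.Theory.
Local Open Scope ring_scope.

Definition nnR := {r : R | Rle 0 r}.
Definition nnv (r : nnR) : R := proj1_sig r.

Definition lin (U V : lmodType rat) (f : U -> V) : Prop :=
  forall (a : rat) (x y : U), f (a *: x + y) = a *: f x + f y.

(** Data of a persistence (non-negatively graded, cohomological) cochain
    complex of Q-vector spaces: at each r >= 0 and degree n a Q-vector space,
    differentials d : C_r^n -> C_r^{n+1}, and structure maps C_r -> C_r'
    (only meaningful for r <= r'). *)
Record pcc : Type := PCC {
  obj : nnR -> nat -> lmodType rat;
  dif : forall r n, obj r n -> obj r n.+1;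
  tr  : forall r r' n, obj r n -> obj r' n }.

Definition is_pcc (X : pcc) : Prop :=
  [/\ (forall r n, lin (@dif X r n)),
      (forall r n x, dif (dif x) = 0 :> obj X r n.+2),
      (forall r r' n, Rle (nnv r) (nnv r') -> lin (@tr X r r' n)) /\
      (forall r r' n (x : obj X r n), Rle (nnv r) (nnv r') ->
          tr r' (dif x) = dif (tr r' x)) /\
      (forall r n (x : obj X r n), tr r x = x)
    & (forall r r' r'' n (x : obj X r n), Rle (nnv r) (nnv r') ->
          Rle (nnv r') (nnv r'') -> tr r'' (tr r' x) = tr r'' x)].

Definition pchmap (X Y : pcc) : Type := forall r n, obj X r n -> obj Y r n.

Definition is_pmap (X Y : pcc) (f : pchmap X Y) : Prop :=
  [/\ (forall r n, lin (f r n)),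
      (forall r n (x : obj X r n), f r n.+1 (dif x) = dif (f r n x))
    & (forall r r' n (x : obj X r n), Rle (nnv r) (nnv r') ->
          f r' n (tr r' x) = tr r' (f r n x))].

Definition RLP (A B : pcc) (i : pchmap A B) (X Y : pcc) (p : pchmap X Y) : Prop :=
  forall (u : pchmap A X) (v : pchmap B Y),
    is_pmap u -> is_pmap v ->
    (forall r n (a : obj A r n), p r n (u r n a) = v r n (i r n a)) ->
    exists h : pchmap B X,
      [/\ is_pmap h,
          (forall r n (a : obj A r n), h r n (i r n a) = u r n a)
        & (forall r n (b : obj B r n), p r n (h r n b) = v r n b)].

Definition cobd (X : pcc) (r : nnR) (n : nat) : obj X r n -> Prop :=
  match n as m return obj X r m -> Prop with
  | 0 => fun x => x = 0
  | m.+1 => fun x => exists y : obj X r m, dif y = x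
  end.

(** f_r induces a bijection H^n(X_r) -> H^n(Y_r) for all n (quasi-iso). *)
Definition quasi_iso_at (X Y : pcc) (f : pchmap X Y) (r : nnR) : Prop :=
  forall n,
    (forall x : obj X r n, dif x = 0 -> cobd (f r n x) -> cobd x) /\
    (forall y : obj Y r n, dif y = 0 ->
        exists x : obj X r n, dif x = 0 /\ cobd (y - f r n x)).

Definition inW (X Y : pcc) (f : pchmap X Y) : Prop := forall r, quasi_iso_at f r.

(** Elementary persistence complexes: each space is Q^{dim r n} with
    dim r n <= 1; the differential at degree n is the matrix with entries
    [n+1 = k] (this is the identity Q -> Q from degree k-1 to k of D^k,
    and zero otherwise); all structure maps are "identity where possible",
    i.e. the all-ones matrix (between spaces of dimension <= 1). *)
Definition elem (dim : R -> nat -> nat) (k : nat) : pcc :=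
  @PCC (fun r n => ('rV[rat]_(dim (nnv r) n) : lmodType rat))
    (fun r n x => x *m \matrix_(i < dim (nnv r) n, j < dim (nnv r) n.+1)
                          ((n.+1 == k)%:R : rat))
    (fun r r' n x => x *m const_mx (1 : rat)).

Definition ones_map (dA dB : R -> nat -> nat) (kA kB : nat)
  : pchmap (elem dA kA) (elem dB kB) :=
  fun r n x => x *m const_mx (1 : rat).

(** dimensions of the disk D^k : Q in degrees k-1, k (k >= 1); D^0 = 0. *)
Definition dimD (k n : nat) : nat :=
  if k is 0 then 0 else ((n.+1 == k) || (n == k) : nat).

(** extended endpoint t in (0, oo]: None = oo *)
Definition before (r : R) (t : option R) : bool :=
  match t with None => true | Some t => if Rlt_dec r t then true else false end.

(** S^k_[s,t) : 0 for r < s, S^k for s <= r < t, D^k for r >= t. *)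
Definition dimS (k : nat) (s : R) (t : option R) (r : R) (n : nat) : nat :=
  if Rlt_dec r s then 0 else if before r t then (n == k : nat) else dimD k n.

(** D^k_s : 0 for r < s, D^k for r >= s. *)
Definition dimDs (k : nat) (s : R) (r : R) (n : nat) : nat :=
  if Rlt_dec r s then 0 else dimD k n.

Definition dim0 (r : R) (n : nat) : nat := 0.

Definition Sph (k : nat) (s : R) (t : option R) : pcc := elem (dimS k s t) k.
Definition Dsk (k : nat) (s : R) : pcc := elem (dimDs k s) k.
Definition Zero : pcc := elem dim0 0.

Definition Imap (k : nat) (s : R) (t : option R) : pchmap (Sph k s t) (Dsk k s) :=
  @ones_map (dimS k s t) (dimDs k s) k k.
Definition Jmap (k : nat) (s t : R) : pchmap (Dsk k t) (Dsk k s) :=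
  @ones_map (dimDs k t) (dimDs k s) k k.
Definition Jmap0 (k : nat) (s : R) : pchmap Zero (Dsk k s) :=
  @ones_map dim0 (dimDs k s) 0 k.

Arguments Sph : clear implicits.
Arguments Dsk : clear implicits.
Arguments Imap : clear implicits.
Arguments Jmap : clear implicits.
Arguments Jmap0 : clear implicits.

Definition ltb_ext (s : R) (t : option R) : Prop :=
  match t with None => True | Some t => Rlt s t end.

Definition RLP_I (X Y : pcc) (p : pchmap X Y) : Prop :=
  forall (k : nat) (s : R) (t : option R),
    Rle 0 s -> ltb_ext s t -> RLP (Imap k s t) p.

Definition RLP_J (X Y : pcc) (p : pchmap X Y) : Prop :=
  (forall (k : nat) (s t : R), Rle 0 s -> Rlt s t -> RLP (Jmap k s t) p) /\
  (forall (k : nat) (s : R), Rle 0 s -> RLP (Jmap0 k s) p).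

(* Main.v *)
Require Import Defs.
From Stdlib Require Import Reals Lra Eqdep_dec.
From HB Require Import structures.
From mathcomp Require Import all_boot all_order all_algebra.
From mathcomp Require Import zify.
Set Implicit Arguments. Unset Strict Implicit. Unset Printing Implicit Defensive.
Import GRing.Theory.
Local Open Scope ring_scope.

Lemma lin0 (U V : lmodType rat) (f : U -> V) : lin f -> f 0 = 0.
Proof.
move=> hf; have := hf 1 0 0; rewrite scaler0 addr0 scale1r.
by rewrite -{1}[f 0]addr0 => /addrI.
Qed.

Lemma linZ (U V : lmodType rat) (f : U -> V) : lin f -> forall a x, f (a *: x) = a *: f x.
Proof. by move=> hf a x; have := hf a x 0; rewrite !addr0 (lin0 hf) addr0. Qed.

Lemma linD (U V : lmodType rat) (f : U -> V) : lin f -> forall x y, f (x + y) = f x + f y.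
Proof. by move=> hf x y; have := hf 1 x y; rewrite !scale1r. Qed.

Lemma linB (U V : lmodType rat) (f : U -> V) : lin f -> forall x y, f (x - y) = f x - f y.
Proof. by move=> hf x y; have := hf (-1) y x; rewrite !scaleN1r addrC [- _ + _]addrC. Qed.

Definition sig m (v : 'rV[rat]_m) : rat := \sum_(j < m) v 0 j.

Lemma sig_lin m a (v w : 'rV[rat]_m) : sig (a *: v + w) = a * sig v + sig w.
Proof. rewrite /sig mulr_sumr -big_split. apply: eq_bigr => j _. by rewrite !mxE. Qed.

Lemma sig_mulc a b (v : 'rV[rat]_a) (c : rat) :
  sig (v *m (const_mx c : 'M_(a, b))) = sig v * c * b%:R.
Proof.
rewrite /sig.
have E : forall j, (v *m (const_mx c : 'M_(a, b))) 0 j = (\sum_(i < a) v 0 i) * c.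
  move=> j; rewrite !mxE mulr_suml; apply: eq_bigr => i _; rewrite mxE; reflexivity.
rewrite (eq_bigr (fun _ => (\sum_(i < a) v 0 i) * c)); last by move=> j _; exact: E.
by rewrite sumr_const card_ord mulr_natr.
Qed.

Lemma sig_mat a b (v : 'rV[rat]_a) (c : rat) :
  sig (v *m (\matrix_(i < a, j < b) c)) = sig v * c * b%:R.
Proof.
have -> : (\matrix_(i < a, j < b) c) = const_mx c by apply/matrixP => i j; rewrite !mxE.
exact: sig_mulc.
Qed.

Lemma sig_dim0 m (v : 'rV[rat]_m) : m = 0%N -> sig v = 0.
Proof. by move=> e; rewrite /sig; move: v; rewrite e => v; rewrite big_ord0. Qed.

Lemma sig_c1 m : sig (const_mx 1 : 'rV[rat]_m) = m%:R.
Proof. by rewrite /sig; under eq_bigr => j _ do rewrite mxE; rewrite sumr_const card_ord. Qed.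

Lemma rv_small m (v : 'rV[rat]_m) : (m <= 1)%N -> v = sig v *: const_mx 1.
Proof.
case: m v => [|[|m]] v // _; apply/matrixP => i j.
- by case: j.
- by rewrite !mxE /sig big_ord1 mulr1 !ord1.
Qed.

Definition castn (X : pcc) r m n (x : obj X r m) : obj X r n :=
  match Nat.eq_dec m n with left e => eq_rect m (obj X r) x n e | right _ => 0 end.

Lemma castnn (X : pcc) r m (x : obj X r m) : castn m x = x.
Proof.
rewrite /castn; case: (Nat.eq_dec m m) => [e|ne]; last by [].
by rewrite (UIP_refl_nat _ e).
Qed.

Lemma castn_ne (X : pcc) r m n (x : obj X r m) : m != n -> castn n x = 0.
Proof. by move=> H; rewrite /castn; case: Nat.eq_dec => // e; rewrite e eqxx in H. Qed.

Lemma castn_S (X : pcc) r m (x : obj X r m.+1) : castn m x = 0.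
Proof. by rewrite castn_ne //; lia. Qed.
Lemma castn_Sr (X : pcc) r m (x : obj X r m) : castn m.+1 x = 0.
Proof. by rewrite castn_ne //; lia. Qed.

Lemma castn_map (X Y : pcc) r m n (f : forall n, obj X r n -> obj Y r n) (x : obj X r m) :
  f n 0 = 0 -> f n (castn n x) = castn n (f m x).
Proof. by move=> H; rewrite /castn; case: Nat.eq_dec => // e; subst. Qed.


Definition dimle1 (d : R -> nat -> nat) := forall r n, (d r n <= 1)%N.

Definition mk (X : pcc) d k (g : forall r n, obj X r n) : pchmap (elem d k) X :=
  fun r n v => sig v *: g r n.

Definition G (X : pcc) d k (f : pchmap (elem d k) X) r n : obj X r n :=
  f r n (const_mx 1).

Definition fam_ok (X : pcc) (d : R -> nat -> nat) (k : nat) (g : forall r n, obj X r n) :=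
 [/\ forall r n, d (nnv r) n = 0%N -> g r n = 0,
     forall r n, d (nnv r) n = 1%N ->
        dif (g r n) = ((n.+1 == k)%:R * (d (nnv r) n.+1)%:R) *: g r n.+1
   & forall r r' n, Rle (nnv r) (nnv r') -> d (nnv r) n = 1%N ->
        tr r' (g r n) = (d (nnv r') n)%:R *: g r' n].

Lemma pmap_form (X : pcc) d k (f : pchmap (elem d k) X) :
  dimle1 d -> is_pmap f -> forall r n v, f r n v = sig v *: G f r n.
Proof.
move=> hd [Hl Hd Ht] r n v.
by rewrite {1}(rv_small v (hd _ _)) (linZ (Hl r n)).
Qed.

Lemma pmap_out (X : pcc) d k (f : pchmap (elem d k) X) :
  dimle1 d -> is_pmap f -> fam_ok d k (G f).
Proof.
move=> hd Hf; have E := pmap_form hd Hf; case: Hf => Hl Hd Ht; split.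
- move=> r n e; rewrite /G E sig_c1 e; exact: scale0r.
- move=> r n e; rewrite /G -Hd E /= sig_mat sig_c1 e mul1r; reflexivity.
- move=> r r' n le e; rewrite /G -(Ht _ _ _ _ le) E /= sig_mulc sig_c1 e mul1r. reflexivity.
Qed.

Lemma pcc_difl X : is_pcc X -> forall r n, lin (@dif X r n).
Proof. by case. Qed.
Lemma pcc_dd X : is_pcc X -> forall r n (x : obj X r n), dif (dif x) = 0.
Proof. by case. Qed.
Lemma pcc_trl X : is_pcc X -> forall r r' n, Rle (nnv r) (nnv r') -> lin (@tr X r r' n).
Proof. by case=> _ _ [H _]. Qed.
Lemma pcc_trd X : is_pcc X -> forall r r' n (x : obj X r n), Rle (nnv r) (nnv r') ->
          tr r' (dif x) = dif (tr r' x).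
Proof. by case=> _ _ [_ [H _]]. Qed.
Lemma pcc_tri X : is_pcc X -> forall r n (x : obj X r n), tr r x = x.
Proof. by case=> _ _ [_ [_ H]]. Qed.
Lemma pcc_trt X : is_pcc X -> forall r r' r'' n (x : obj X r n), Rle (nnv r) (nnv r') ->
          Rle (nnv r') (nnv r'') -> tr r'' (tr r' x) = tr r'' x.
Proof. by case. Qed.

Lemma dim01 d r n : dimle1 d -> d r n = 0%N \/ d r n = 1%N.
Proof. move=> h; move: (h r n); case: (d r n) => [|[|m]] //; auto. Qed.

Arguments pcc_difl {X} _ {r n}.
Arguments pcc_trl {X} _ {r r' n}.
Arguments pcc_dd {X} _ {r n}.
Arguments pcc_trd {X} _ {r r' n}.
Arguments pcc_tri {X} _ {r n}.
Arguments pcc_trt {X} _ {r r' r'' n}.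

Lemma pmap_in (X : pcc) d k (g : forall r n, obj X r n) :
  is_pcc X -> dimle1 d -> fam_ok d k g -> is_pmap (@mk X d k g).
Proof.
move=> HX hd [H0 H1 H2]; split.
- move=> r n a x y; rewrite /mk sig_lin scalerDl scalerA; reflexivity.
- move=> r n x; rewrite /mk /= sig_mat (linZ (pcc_difl HX)).
  case: (dim01 (nnv r) n hd) => e.
    by rewrite (sig_dim0 x e) !mul0r !scale0r.
  by rewrite H1 // scalerA mulrA.
- move=> r r' n x le; rewrite /mk /= sig_mulc (linZ (pcc_trl HX le)) mulr1.
  case: (dim01 (nnv r) n hd) => e.
    by rewrite (sig_dim0 x e) !mul0r !scale0r.
  by rewrite H2 // scalerA.
Qed.

Lemma neqSn m : (m.+1 == m) = false. Proof. lia. Qed.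
Lemma neqnS m : (m == m.+1) = false. Proof. lia. Qed.
Lemma nnle (r : nnR) : Rle 0 (nnv r). Proof. by case: r. Qed.

Lemma dimD_le1 k n : (dimD k n <= 1)%N.
Proof. by case: k => [|k] //=; case: (_ || _). Qed.
Lemma dimDs_le1 k s : dimle1 (dimDs k s).
Proof. by move=> r n; rewrite /dimDs; case: Rlt_dec => ? //; exact: dimD_le1. Qed.
Lemma dimS_le1 k s t : dimle1 (dimS k s t).
Proof.
move=> r n; rewrite /dimS; case: Rlt_dec => ? //; case: (before r t); [by case: (n == k) | exact: dimD_le1].
Qed.
Lemma dim0_le1 : dimle1 dim0. Proof. by []. Qed.

Definition gD (X : pcc) m (s0 : nnR) (x : obj X s0 m) : forall r n, obj X r n :=
 fun r n => if Rlt_dec (nnv r) (nnv s0) then 0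
            else castn n (tr r x) + castn n (tr r (dif x)).

Lemma dimD_other m n : n != m -> n != m.+1 -> dimD m.+1 n = 0%N.
Proof. by move=> h1 h2; rewrite /dimD eqSS (negbTE h1) (negbTE h2). Qed.
Lemma dimD_m m : dimD m.+1 m = 1%N.
Proof. by rewrite /dimD eqxx. Qed.
Lemma dimD_m1 m : dimD m.+1 m.+1 = 1%N.
Proof. by rewrite /dimD eqxx orbT. Qed.

Lemma dimDs_lt k s r n : Rlt r s -> dimDs k s r n = 0%N.
Proof. by rewrite /dimDs; case: Rlt_dec. Qed.
Lemma dimDs_ge k s r n : ~ Rlt r s -> dimDs k s r n = dimD k n.
Proof. by rewrite /dimDs; case: Rlt_dec. Qed.
Lemma gD_lt (X : pcc) m (s0 : nnR) (x : obj X s0 m) r n :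
  Rlt (nnv r) (nnv s0) -> gD x r n = 0.
Proof. by rewrite /gD; case: Rlt_dec. Qed.
Lemma gD_ge (X : pcc) m (s0 : nnR) (x : obj X s0 m) r n :
  ~ Rlt (nnv r) (nnv s0) -> gD x r n = castn n (tr r x) + castn n (tr r (dif x)).
Proof. by rewrite /gD; case: Rlt_dec. Qed.

Lemma gD_ok (X : pcc) m (s0 : nnR) (x : obj X s0 m) :
  is_pcc X -> fam_ok (dimDs m.+1 (nnv s0)) m.+1 (gD x).
Proof.
move=> HX; split.
- move=> r n; case: (Rlt_dec (nnv r) (nnv s0)) => Hrs; first by rewrite gD_lt.
  rewrite dimDs_ge // gD_ge //.
  have [->|nm] := eqVneq n m; first by rewrite dimD_m.
  have [->|nm1] := eqVneq n m.+1; first by rewrite dimD_m1.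
  by rewrite dimD_other // !castn_ne ?addr0 // eq_sym.
- move=> r n; case: (Rlt_dec (nnv r) (nnv s0)) => Hrs; first by rewrite dimDs_lt.
  rewrite !dimDs_ge // !gD_ge // => e.
  have le : Rle (nnv s0) (nnv r) by apply: Rnot_lt_le.
  have [En|nm] := eqVneq n m.
    subst n; rewrite castnn castn_S castn_Sr castnn addr0 add0r.
    by rewrite dimD_m1 eqxx mul1r scale1r (pcc_trd HX).
  have [En|nm1] := eqVneq n m.+1.
    subst n; rewrite castn_Sr castnn add0r.
    rewrite -(pcc_trd HX) // (pcc_dd HX) (lin0 (pcc_trl HX le)).
    by rewrite eqSS neqSn mul0r scale0r.
  by rewrite dimD_other in e.
- move=> r r' n le; case: (Rlt_dec (nnv r) (nnv s0)) => Hrs; first by rewrite dimDs_lt.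
  case: (Rlt_dec (nnv r') (nnv s0)) => Hr's; first by exfalso; lra.
  rewrite !dimDs_ge // !gD_ge // => e.
  have le1 : Rle (nnv s0) (nnv r) by apply: Rnot_lt_le.
  have [En|nm] := eqVneq n m.
    subst n; rewrite !castnn !castn_S !addr0 dimD_m scale1r.
    by rewrite (pcc_trt HX).
  have [En|nm1] := eqVneq n m.+1.
    subst n; rewrite !castnn !castn_Sr !add0r dimD_m1 scale1r.
    by rewrite (pcc_trt HX).
  by rewrite dimD_other in e.
Qed.

Lemma gD_uniq (X : pcc) m (s0 : nnR) (g : forall r n, obj X r n) :
  is_pcc X -> fam_ok (dimDs m.+1 (nnv s0)) m.+1 g ->
  forall r n, g r n = gD (g s0 m) r n.
Proof.
move=> HX [H0 H1 H2] r n.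
case: (Rlt_dec (nnv r) (nnv s0)) => Hrs; first by rewrite gD_lt // H0 // dimDs_lt.
rewrite gD_ge //.
have le : Rle (nnv s0) (nnv r) by apply: Rnot_lt_le.
have Es : dimDs m.+1 (nnv s0) (nnv s0) m = 1%N by rewrite dimDs_ge ?dimD_m //; apply: Rlt_irrefl.
have Em : g r m = tr r (g s0 m) by rewrite (H2 _ _ _ le Es) dimDs_ge // dimD_m scale1r.
have [En|nm] := eqVneq n m; first by subst n; rewrite castnn castn_S addr0 Em.
have [En|nm1] := eqVneq n m.+1.
  subst n; rewrite castn_Sr castnn add0r.
  have Hd := H1 r m; rewrite eqxx !dimDs_ge // dimD_m1 dimD_m mul1r scale1r in Hd.
  by rewrite -(Hd erefl) Em (pcc_trd HX).
by rewrite H0 ?dimDs_ge ?dimD_other // !castn_ne ?addr0 // eq_sym.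
Qed.

Lemma dimS_lt k s t r n : Rlt r s -> dimS k s t r n = 0%N.
Proof. by rewrite /dimS; case: Rlt_dec. Qed.
Lemma dimS_bef k s t r n : ~ Rlt r s -> before r t = true -> dimS k s t r n = (n == k : nat).
Proof. by move=> H1 H2; rewrite /dimS H2; case: Rlt_dec. Qed.
Lemma dimS_aft k s t r n : ~ Rlt r s -> before r t = false -> dimS k s t r n = dimD k n.
Proof. by move=> H1 H2; rewrite /dimS H2; case: Rlt_dec. Qed.

Lemma before_spec r t : before r t = false -> exists tt, t = Some tt /\ Rle tt r.
Proof.
case: t => [tt|] //=; case: Rlt_dec => // H _; exists tt; split => //; exact: Rnot_lt_le.
Qed.
Lemma before_le r r' t : Rle r r' -> before r t = false -> before r' t = false.
Proof.
move=> le /before_spec [tt [-> le2]] /=; case: Rlt_dec => // H; exfalso; lra.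
Qed.
Lemma before_s s t : ltb_ext s t -> before s t = true.
Proof. by case: t => [tt|] //= H; case: Rlt_dec. Qed.
Lemma before_t tt r : Rle tt r -> before r (Some tt) = false.
Proof. by move=> H /=; case: Rlt_dec => // H2; exfalso; lra. Qed.

Definition gS (X : pcc) m (s0 : nnR) (t : option R) (t0 : nnR)
  (a : obj X s0 m.+1) (z : obj X t0 m) : forall r n, obj X r n :=
 fun r n => if Rlt_dec (nnv r) (nnv s0) then 0
            else if before (nnv r) t then castn n (tr r a) else gD z r n.

Lemma gS_lt (X : pcc) m s0 t t0 (a : obj X s0 m.+1) (z : obj X t0 m) r n :
  Rlt (nnv r) (nnv s0) -> gS t a z r n = 0.
Proof. by rewrite /gS; case: Rlt_dec. Qed.
Lemma gS_bef (X : pcc) m s0 t t0 (a : obj X s0 m.+1) (z : obj X t0 m) r n :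
  ~ Rlt (nnv r) (nnv s0) -> before (nnv r) t = true -> gS t a z r n = castn n (tr r a).
Proof. by move=> H1 H2; rewrite /gS H2; case: Rlt_dec. Qed.
Lemma gS_aft (X : pcc) m s0 t t0 (a : obj X s0 m.+1) (z : obj X t0 m) r n :
  ~ Rlt (nnv r) (nnv s0) -> before (nnv r) t = false -> gS t a z r n = gD z r n.
Proof. by move=> H1 H2; rewrite /gS H2; case: Rlt_dec. Qed.

Definition tcond (s0 : nnR) (t : option R) (t0 : nnR) :=
  forall tt, t = Some tt -> nnv t0 = tt /\ Rlt (nnv s0) tt.

Lemma gS_ok (X : pcc) m (s0 : nnR) t (t0 : nnR) (a : obj X s0 m.+1) (z : obj X t0 m) :
  is_pcc X -> dif a = 0 -> tcond s0 t t0 ->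
  (t <> None -> dif z = tr t0 a) ->
  fam_ok (dimS m.+1 (nnv s0) t) m.+1 (gS t a z).
Proof.
move=> HX Ha Ht Hz; have [G0 G1 G2] := gD_ok z HX.
have aft : forall r, before (nnv r) t = false -> ~ Rlt (nnv r) (nnv t0) /\ Rlt (nnv s0) (nnv t0).
  move=> r /before_spec [tt [Et le]]; have [-> lt] := Ht _ Et; split => //; lra.
split.
- move=> r n; case: (Rlt_dec (nnv r) (nnv s0)) => Hrs; first by rewrite gS_lt.
  case Eb: (before (nnv r) t).
    rewrite dimS_bef // gS_bef //; have [->|nm] := eqVneq n m.+1; first by [].
    by rewrite castn_ne // eq_sym.
  have [A1 A2] := aft r Eb.
  rewrite dimS_aft // gS_aft // => e; apply: G0; by rewrite dimDs_ge.
- move=> r n; case: (Rlt_dec (nnv r) (nnv s0)) => Hrs; first by rewrite dimS_lt.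
  have le : Rle (nnv s0) (nnv r) by apply: Rnot_lt_le.
  case Eb: (before (nnv r) t).
    rewrite dimS_bef // gS_bef //; have [En|nm] := eqVneq n m.+1; last by [].
    subst n => _; rewrite castnn -(pcc_trd HX) // Ha (lin0 (pcc_trl HX le)).
    by rewrite eqSS neqSn mul0r scale0r.
  have [A1 A2] := aft r Eb.
  rewrite !dimS_aft // !gS_aft // => e; by rewrite G1 ?dimDs_ge.
- move=> r r' n le; case: (Rlt_dec (nnv r) (nnv s0)) => Hrs; first by rewrite dimS_lt.
  have le1 : Rle (nnv s0) (nnv r) by apply: Rnot_lt_le.
  have Hr's : ~ Rlt (nnv r') (nnv s0) by lra.
  case Eb: (before (nnv r) t); last first.
    have Eb' := before_le le Eb; have [A1 A2] := aft r Eb; have [A1' _] := aft r' Eb'.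
    rewrite !dimS_aft // !gS_aft // => e; by rewrite G2 ?dimDs_ge.
  rewrite dimS_bef // gS_bef //; have [En|nm] := eqVneq n m.+1; last by [].
  subst n => _; rewrite castnn (pcc_trt HX) //.
  case Eb': (before (nnv r') t).
    by rewrite dimS_bef // gS_bef // eqxx castnn scale1r.
  have [A1' A2'] := aft r' Eb'.
  rewrite dimS_aft // gS_aft // dimD_m1 scale1r gD_ge // castn_Sr castnn add0r.
  have [tt [Et _]] := before_spec Eb'.
  rewrite Hz; last by rewrite Et.
  rewrite (pcc_trt HX) //; [lra | lra].
Qed.

Lemma gS_uniq (X : pcc) m (s0 : nnR) t (t0 : nnR) (g : forall r n, obj X r n) :
  is_pcc X -> tcond s0 t t0 -> ltb_ext (nnv s0) t ->
  fam_ok (dimS m.+1 (nnv s0) t) m.+1 g ->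
  forall r n, g r n = gS t (g s0 m.+1) (g t0 m) r n.
Proof.
move=> HX Ht Hst [H0 H1 H2] r n.
have aft : forall r, before (nnv r) t = false -> ~ Rlt (nnv r) (nnv t0) /\ Rlt (nnv s0) (nnv t0).
  move=> r' /before_spec [tt [Et le]]; have [-> lt] := Ht _ Et; split => //; lra.
case: (Rlt_dec (nnv r) (nnv s0)) => Hrs; first by rewrite gS_lt // H0 // dimS_lt.
have le : Rle (nnv s0) (nnv r) by apply: Rnot_lt_le.
have Ess : ~ Rlt (nnv s0) (nnv s0) by apply: Rlt_irrefl.
case Eb: (before (nnv r) t).
  rewrite gS_bef //; have [En|nm] := eqVneq n m.+1.
    subst n; rewrite castnn (H2 _ _ _ le); last by rewrite dimS_bef ?eqxx // before_s.
    by rewrite dimS_bef // eqxx scale1r.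
  by rewrite H0 ?dimS_bef ?(negbTE nm) // castn_ne // eq_sym.
have [A1 A2] := aft r Eb.
have le2 : Rle (nnv t0) (nnv r) by apply: Rnot_lt_le.
have Eb0 : before (nnv t0) t = false.
  have [tt [Et _]] := before_spec Eb; have [E1 _] := Ht _ Et; rewrite Et -E1; apply: before_t; lra.
have Hts : ~ Rlt (nnv t0) (nnv s0) by lra.
have Em : g r m = tr r (g t0 m).
  rewrite (H2 _ _ _ le2); last by rewrite dimS_aft // dimD_m.
  by rewrite dimS_aft // dimD_m scale1r.
rewrite gS_aft // gD_ge //.
have [En|nm] := eqVneq n m; first by subst n; rewrite castnn castn_S addr0 Em.
have [En|nm1] := eqVneq n m.+1.
  subst n; rewrite castn_Sr castnn add0r.
  have Hd := H1 r m; rewrite eqxx !dimS_aft // dimD_m1 dimD_m mul1r scale1r in Hd.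
  by rewrite -(Hd erefl) Em (pcc_trd HX).
by rewrite H0 ?dimS_aft ?dimD_other // !castn_ne ?addr0 // eq_sym.
Qed.

Lemma pmap_lin X Y (p : pchmap X Y) : is_pmap p -> forall r n, lin (p r n).
Proof. by case. Qed.
Lemma pmap_dif X Y (p : pchmap X Y) : is_pmap p -> forall r n (x : obj X r n),
  p r n.+1 (dif x) = dif (p r n x).
Proof. by case. Qed.
Lemma pmap_tr X Y (p : pchmap X Y) : is_pmap p -> forall r r' n (x : obj X r n),
  Rle (nnv r) (nnv r') -> p r' n (tr r' x) = tr r' (p r n x).
Proof. by case. Qed.

Arguments pmap_lin {X Y p} _ {r n}.
Arguments pmap_dif {X Y p} _ {r n}.
Arguments pmap_tr {X Y p} _ {r r' n}.

Lemma gD_map (X Y : pcc) (p : pchmap X Y) m (s0 : nnR) (x : obj X s0 m) r n :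
  is_pmap p -> p r n (gD x r n) = gD (p s0 m x) r n.
Proof.
move=> Hp.
case: (Rlt_dec (nnv r) (nnv s0)) => Hrs; first by rewrite !gD_lt // (lin0 (pmap_lin Hp)).
have le : Rle (nnv s0) (nnv r) by apply: Rnot_lt_le.
rewrite !gD_ge // (linD (pmap_lin Hp)) !(@castn_map X Y r _ n (p r)) ?(lin0 (pmap_lin Hp)) //.
by rewrite !(pmap_tr Hp) // (pmap_dif Hp).
Qed.

Lemma gD_shift (X : pcc) m (s0 t0 : nnR) (x : obj X s0 m) r n :
  is_pcc X -> Rle (nnv s0) (nnv t0) -> Rle (nnv t0) (nnv r) ->
  gD (tr t0 x) r n = gD x r n.
Proof.
move=> HX l1 l2; rewrite !gD_ge; try lra.
by rewrite (pcc_trt HX) // -(pcc_trd HX) // (pcc_trt HX).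
Qed.

Lemma Dsk_m m s (r : nnR) : Rle s (nnv r) -> dimDs m.+1 s (nnv r) m = 1%N.
Proof. by move=> h; rewrite dimDs_ge ?dimD_m //; lra. Qed.
Lemma Dsk_m1 m s (r : nnR) : Rle s (nnv r) -> dimDs m.+1 s (nnv r) m.+1 = 1%N.
Proof. by move=> h; rewrite dimDs_ge ?dimD_m1 //; lra. Qed.

Lemma elimI (X Y : pcc) (p : pchmap X Y) m (s0 : nnR) t (t0 : nnR)
  (a : obj X s0 m.+1) (z : obj X t0 m) (b : obj Y s0 m) :
  is_pcc X -> is_pcc Y -> is_pmap p -> tcond s0 t t0 -> ltb_ext (nnv s0) t ->
  dif a = 0 -> p _ _ a = dif b ->
  (t <> None -> dif z = tr t0 a /\ p _ _ z = tr t0 b) ->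
  RLP (Imap m.+1 (nnv s0) t) p ->
  exists w : obj X s0 m, [/\ dif w = a, p _ _ w = b & (t <> None -> tr t0 w = z)].
Proof.
move=> HX HY Hp Ht Hst Ha Hpa Hz HR.
have aft : forall r, before (nnv r) t = false -> ~ Rlt (nnv r) (nnv t0) /\ Rlt (nnv s0) (nnv t0).
  move=> r' /before_spec [tt [Et le]]; have [-> lt] := Ht _ Et; split => //; lra.
have Hz1 : t <> None -> dif z = tr t0 a by move=> H; case: (Hz H).
set u := @mk X (dimS m.+1 (nnv s0) t) m.+1 (gS t a z).
set v := @mk Y (dimDs m.+1 (nnv s0)) m.+1 (gD b).
have Hu : is_pmap u := pmap_in HX (dimS_le1 _ _ _) (gS_ok HX Ha Ht Hz1).
have Hv : is_pmap v := pmap_in HY (dimDs_le1 _ _) (gD_ok b HY).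
have compat : forall r n, dimS m.+1 (nnv s0) t (nnv r) n = 1%N ->
    p r n (gS t a z r n) = (dimDs m.+1 (nnv s0) (nnv r) n)%:R *: gD b r n.
  move=> r n; case: (Rlt_dec (nnv r) (nnv s0)) => Hrs; first by rewrite dimS_lt.
  have le : Rle (nnv s0) (nnv r) by apply: Rnot_lt_le.
  case Eb: (before (nnv r) t).
    rewrite dimS_bef //; have [En|nm] := eqVneq n m.+1; last by [].
    subst n => _; rewrite gS_bef // castnn Dsk_m1 // scale1r gD_ge // castn_Sr castnn add0r.
    by rewrite (pmap_tr Hp) // Hpa (pcc_trd HY).
  have [A1 A2] := aft r Eb.
  have [tt [Et _]] := before_spec Eb.
  have [_ Hpz] := Hz ltac:(by rewrite Et).
  rewrite dimS_aft // gS_aft // gD_map // Hpz gD_shift //; try lra.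
  by move=> e; rewrite dimDs_ge // e scale1r.
have Hc : forall r n (x : obj (Sph m.+1 (nnv s0) t) r n),
    p r n (u r n x) = v r n (Imap m.+1 (nnv s0) t r n x).
  move=> r n x; rewrite /u /v /mk /Imap /ones_map /= sig_mulc mulr1 (linZ (pmap_lin Hp)).
  case: (dim01 (nnv r) n (dimS_le1 m.+1 (nnv s0) t)) => e.
    by rewrite (sig_dim0 x e) !mul0r !scale0r.
  by rewrite compat // scalerA.
have [h [Hh Hhi Hph]] := HR u v Hu Hv Hc.
have Eh := pmap_form (dimDs_le1 _ _) Hh.
have [K0 K1 K2] := pmap_out (dimDs_le1 _ _) Hh.
have ss : Rle (nnv s0) (nnv s0) by apply: Rle_refl.
have Ess : ~ Rlt (nnv s0) (nnv s0) by apply: Rlt_irrefl.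
have bs := before_s Hst.
exists (G h s0 m); split.
- have E1 := Hhi s0 m.+1 (const_mx 1).
  rewrite Eh /u /mk /Imap /ones_map /= sig_mulc sig_c1 dimS_bef // eqxx mulr1 mul1r in E1.
  rewrite Dsk_m1 // scale1r gS_bef // castnn (pcc_tri HX) in E1.
  rewrite K1 ?Dsk_m // eqxx Dsk_m1 // mul1r scale1r; by rewrite E1 /= scale1r.
- have E1 := Hph s0 m (const_mx 1).
  have D1 : (dimDs m.+1 (nnv s0) (nnv s0) m)%:R = 1 :> rat by rewrite Dsk_m.
  rewrite /v /mk sig_c1 D1 scale1r gD_ge // castnn castn_S addr0 (pcc_tri HY) in E1.
  exact: E1.
- move=> Hn; case Et: t => [tt|]; last by rewrite Et in Hn.
  have [E0 Hlt] := Ht _ Et.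
  have Ebt : before (nnv t0) t = false by rewrite Et -E0; apply: before_t; lra.
  have [A1 _] := aft t0 Ebt.
  rewrite K2 ?Dsk_m //; last by lra.
  rewrite scale1r.
  have E1 := Hhi t0 m (const_mx 1).
  rewrite Eh /u /mk /Imap /ones_map /= sig_mulc sig_c1 dimS_aft ?dimD_m ?mulr1 ?mul1r in E1; try lra; last by [].
  rewrite Dsk_m ?scale1r in E1; last by lra.
  rewrite E1 gS_aft //; try lra.
  by rewrite gD_ge // castnn castn_S addr0 (pcc_tri HX).
  rewrite E0; lra.
Qed.

Lemma fam_ok_zero (X : pcc) d k : (forall r n, d (nnv r) n = 0%N) ->
  fam_ok d k (fun r n => (0 : obj X r n)).
Proof. by move=> H; split; [| move=> r n; rewrite H | move=> r r' n _; rewrite H]. Qed.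

Lemma dimDs0 s r n : dimDs 0 s r n = 0%N.
Proof. by rewrite /dimDs; case: Rlt_dec. Qed.

Definition gS0 (X : pcc) (s0 : nnR) (a : obj X s0 0) : forall r n, obj X r n :=
  fun r n => if Rlt_dec (nnv r) (nnv s0) then 0 else castn n (tr r a).

Lemma gS0_lt (X : pcc) s0 (a : obj X s0 0) r n :
  Rlt (nnv r) (nnv s0) -> gS0 a r n = 0.
Proof. by rewrite /gS0; case: Rlt_dec. Qed.
Lemma gS0_ge (X : pcc) s0 (a : obj X s0 0) r n :
  ~ Rlt (nnv r) (nnv s0) -> gS0 a r n = castn n (tr r a).
Proof. by rewrite /gS0; case: Rlt_dec. Qed.

Lemma gS0_ok (X : pcc) (s0 : nnR) (a : obj X s0 0) :
  is_pcc X -> dif a = 0 -> fam_ok (dimS 0 (nnv s0) None) 0 (gS0 a).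
Proof.
move=> HX Ha; split.
- move=> r n; case: (Rlt_dec (nnv r) (nnv s0)) => Hrs; first by rewrite gS0_lt.
  rewrite dimS_bef // gS0_ge //; case: n => [|n] //= _; exact: castn_Sr.
- move=> r n; case: (Rlt_dec (nnv r) (nnv s0)) => Hrs; first by rewrite dimS_lt.
  have le : Rle (nnv s0) (nnv r) by apply: Rnot_lt_le.
  rewrite dimS_bef // gS0_ge //; case: n => [|n] //= _.
  by rewrite castnn -(pcc_trd HX) // Ha (lin0 (pcc_trl HX le)) mul0r scale0r.
- move=> r r' n le; case: (Rlt_dec (nnv r) (nnv s0)) => Hrs; first by rewrite dimS_lt.
  have le1 : Rle (nnv s0) (nnv r) by apply: Rnot_lt_le.
  have Hr's : ~ Rlt (nnv r') (nnv s0) by lra.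
  rewrite !dimS_bef // !gS0_ge //; case: n => [|n] //= _.
  by rewrite !castnn (pcc_trt HX) // scale1r.
Qed.

Lemma elimI0 (X Y : pcc) (p : pchmap X Y) (s0 : nnR) (a : obj X s0 0) :
  is_pcc X -> is_pcc Y -> is_pmap p -> dif a = 0 -> p _ _ a = 0 ->
  RLP (Imap 0 (nnv s0) None) p -> a = 0.
Proof.
move=> HX HY Hp Ha Hpa HR.
set u := @mk X (dimS 0 (nnv s0) None) 0 (gS0 a).
set v := @mk Y (dimDs 0 (nnv s0)) 0 (fun r n => 0).
have Hu : is_pmap u := pmap_in HX (dimS_le1 _ _ _) (gS0_ok HX Ha).
have Hv : is_pmap v := pmap_in HY (dimDs_le1 _ _) (fam_ok_zero _ _ (fun r n => dimDs0 _ _ _)).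
have Hc : forall r n (x : obj (Sph 0 (nnv s0) None) r n),
    p r n (u r n x) = v r n (Imap 0 (nnv s0) None r n x).
  move=> r n x; rewrite /u /v /mk /Imap /ones_map /= scaler0 (linZ (pmap_lin Hp)).
  case: (dim01 (nnv r) n (dimS_le1 0 (nnv s0) None)) => e.
    by rewrite (sig_dim0 x e) !scale0r.
  case: (Rlt_dec (nnv r) (nnv s0)) => Hrs; first by rewrite dimS_lt in e.
  have le : Rle (nnv s0) (nnv r) by apply: Rnot_lt_le.
  rewrite gS0_ge //; rewrite dimS_bef // in e; case: n x e => [|n] x //= _.
  by rewrite castnn (pmap_tr Hp) // Hpa (lin0 (pcc_trl HY le)) scaler0.
have [h [Hh Hhi Hph]] := HR u v Hu Hv Hc.
have Eh := pmap_form (dimDs_le1 _ _) Hh.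
have Ess : ~ Rlt (nnv s0) (nnv s0) by apply: Rlt_irrefl.
have E1 := Hhi s0 0%N (const_mx 1).
rewrite Eh /u /mk /Imap /ones_map /= sig_mulc dimDs0 mulr0 scale0r in E1.
by rewrite E1 sig_c1 gS0_ge // dimS_bef // castnn (pcc_tri HX) scale1r.
Qed.

Lemma elimJ (X Y : pcc) (p : pchmap X Y) m (s0 t0 : nnR) (x : obj X t0 m) (y : obj Y s0 m) :
  is_pcc X -> is_pcc Y -> is_pmap p -> Rlt (nnv s0) (nnv t0) ->
  p _ _ x = tr t0 y -> RLP (Jmap m.+1 (nnv s0) (nnv t0)) p ->
  exists x' : obj X s0 m, tr t0 x' = x /\ p _ _ x' = y.
Proof.
move=> HX HY Hp Hst Hpx HR.
set u := @mk X (dimDs m.+1 (nnv t0)) m.+1 (gD x).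
set v := @mk Y (dimDs m.+1 (nnv s0)) m.+1 (gD y).
have Hu : is_pmap u := pmap_in HX (dimDs_le1 _ _) (gD_ok x HX).
have Hv : is_pmap v := pmap_in HY (dimDs_le1 _ _) (gD_ok y HY).
have Hc : forall r n (a : obj (Dsk m.+1 (nnv t0)) r n),
    p r n (u r n a) = v r n (Jmap m.+1 (nnv s0) (nnv t0) r n a).
  move=> r n a; rewrite /u /v /mk /Jmap /ones_map /= sig_mulc mulr1 (linZ (pmap_lin Hp)).
  case: (dim01 (nnv r) n (dimDs_le1 m.+1 (nnv t0))) => e.
    by rewrite (sig_dim0 a e) !mul0r !scale0r.
  case: (Rlt_dec (nnv r) (nnv t0)) => Hrt; first by rewrite dimDs_lt in e.
  rewrite dimDs_ge // in e.
  rewrite gD_map // Hpx gD_shift //; try lra.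
  have D : (dimDs m.+1 (nnv s0) (nnv r) n)%:R = 1 :> rat by rewrite dimDs_ge ?e //; lra.
  by rewrite D mulr1.
have [h [Hh Hhi Hph]] := HR u v Hu Hv Hc.
have Eh := pmap_form (dimDs_le1 _ _) Hh.
have [K0 K1 K2] := pmap_out (dimDs_le1 _ _) Hh.
have ss : Rle (nnv s0) (nnv s0) by apply: Rle_refl.
have Ess : ~ Rlt (nnv s0) (nnv s0) by apply: Rlt_irrefl.
have Ett : ~ Rlt (nnv t0) (nnv t0) by apply: Rlt_irrefl.
exists (G h s0 m); split.
- rewrite K2 ?Dsk_m //; try lra.
  have E1 := Hhi t0 m (const_mx 1).
  rewrite Eh /u /mk /Jmap /ones_map /= sig_mulc sig_c1 in E1.
  have D1 : (dimDs m.+1 (nnv t0) (nnv t0) m)%:R = 1 :> rat by rewrite Dsk_m //; lra.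
  have D2 : (dimDs m.+1 (nnv s0) (nnv t0) m)%:R = 1 :> rat by rewrite Dsk_m //; lra.
  rewrite D1 D2 !mulr1 !scale1r in E1.
  by rewrite scale1r E1 gD_ge // castnn castn_S addr0 (pcc_tri HX).
- have E1 := Hph s0 m (const_mx 1).
  have D1 : (dimDs m.+1 (nnv s0) (nnv s0) m)%:R = 1 :> rat by rewrite Dsk_m.
  rewrite /v /mk sig_c1 D1 scale1r gD_ge // castnn castn_S addr0 (pcc_tri HY) in E1.
  exact: E1.
Qed.

Lemma elimJ0 (X Y : pcc) (p : pchmap X Y) m (s0 : nnR) (y : obj Y s0 m) :
  is_pcc X -> is_pcc Y -> is_pmap p -> RLP (Jmap0 m.+1 (nnv s0)) p ->
  exists x : obj X s0 m, p _ _ x = y.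
Proof.
move=> HX HY Hp HR.
set u := @mk X dim0 0 (fun r n => 0).
set v := @mk Y (dimDs m.+1 (nnv s0)) m.+1 (gD y).
have Hu : is_pmap u := pmap_in HX dim0_le1 (fam_ok_zero _ _ (fun r n => erefl)).
have Hv : is_pmap v := pmap_in HY (dimDs_le1 _ _) (gD_ok y HY).
have Hc : forall r n (a : obj Zero r n),
    p r n (u r n a) = v r n (Jmap0 m.+1 (nnv s0) r n a).
  move=> r n a; rewrite /u /v /mk /Jmap0 /ones_map /= sig_mulc.
  by rewrite (sig_dim0 a erefl) !mul0r !scale0r (lin0 (pmap_lin Hp)).
have [h [Hh Hhi Hph]] := HR u v Hu Hv Hc.
have Ess : ~ Rlt (nnv s0) (nnv s0) by apply: Rlt_irrefl.
exists (G h s0 m).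
have E1 := Hph s0 m (const_mx 1).
have D1 : (dimDs m.+1 (nnv s0) (nnv s0) m)%:R = 1 :> rat by rewrite Dsk_m //; lra.
rewrite /v /mk sig_c1 D1 scale1r gD_ge // castnn castn_S addr0 (pcc_tri HY) in E1.
exact: E1.
Qed.

Lemma zero_pmap (B X : pcc) : is_pcc X -> is_pmap (fun r n (b : obj B r n) => (0 : obj X r n)).
Proof.
move=> HX; split.
- by move=> r n a x y; rewrite scaler0 addr0.
- by move=> r n x; rewrite (lin0 (pcc_difl HX)).
- by move=> r r' n x le; rewrite (lin0 (pcc_trl HX le)).
Qed.

Lemma introZero (X Y : pcc) (p : pchmap X Y) dA dB kA kB
  (i : pchmap (elem dA kA) (elem dB kB)) :
  (forall r n, dA r n = 0%N) -> (forall r n, dB r n = 0%N) ->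
  is_pcc X -> is_pcc Y -> is_pmap p -> RLP i p.
Proof.
move=> hA hB HX HY Hp u v Hu Hv Hc.
have lA : dimle1 dA by move=> r n; rewrite hA.
have lB : dimle1 dB by move=> r n; rewrite hB.
exists (fun r n b => 0); split.
- exact: zero_pmap.
- by move=> r n a; rewrite (pmap_form lA Hu) (sig_dim0 a (hA _ _)) scale0r.
- by move=> r n b; rewrite (pmap_form lB Hv) (sig_dim0 b (hB _ _)) scale0r (lin0 (pmap_lin Hp)).
Qed.

Lemma introJ (X Y : pcc) (p : pchmap X Y) m (s0 t0 : nnR) :
  is_pcc X -> is_pcc Y -> is_pmap p -> Rlt (nnv s0) (nnv t0) ->
  (forall (x : obj X t0 m) (y : obj Y s0 m), p _ _ x = tr t0 y ->
     exists x' : obj X s0 m, tr t0 x' = x /\ p _ _ x' = y) ->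
  RLP (Jmap m.+1 (nnv s0) (nnv t0)) p.
Proof.
move=> HX HY Hp Hst DJ u v Hu Hv Hc.
have Eu := pmap_form (dimDs_le1 _ _) Hu.
have Ev := pmap_form (dimDs_le1 _ _) Hv.
have Ku := pmap_out (dimDs_le1 _ _) Hu.
have Kv := pmap_out (dimDs_le1 _ _) Hv.
have Ett : ~ Rlt (nnv t0) (nnv t0) by apply: Rlt_irrefl.
have [x' [Hx1 Hx2]] : exists x' : obj X s0 m, tr t0 x' = G u t0 m /\ p _ _ x' = G v s0 m.
  apply: DJ.
  have E1 := Hc t0 m (const_mx 1).
  rewrite Ev /Jmap /ones_map /= sig_mulc sig_c1 in E1.
  have D1 : (dimDs m.+1 (nnv t0) (nnv t0) m)%:R = 1 :> rat by rewrite Dsk_m //; lra.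
  have D2 : (dimDs m.+1 (nnv s0) (nnv t0) m)%:R = 1 :> rat by rewrite Dsk_m //; lra.
  rewrite D1 D2 !mulr1 scale1r in E1.
  case: Kv => _ _ K2; rewrite K2 ?Dsk_m //; try lra.
  by rewrite scale1r; exact: E1.
exists (@mk X (dimDs m.+1 (nnv s0)) m.+1 (gD x')); split.
- exact: (pmap_in HX (dimDs_le1 _ _) (gD_ok x' HX)).
- move=> r n a; rewrite /mk /Jmap /ones_map /= sig_mulc mulr1 Eu (gD_uniq HX Ku).
  case: (dim01 (nnv r) n (dimDs_le1 m.+1 (nnv t0))) => e.
    by rewrite (sig_dim0 a e) !mul0r !scale0r.
  case: (Rlt_dec (nnv r) (nnv t0)) => Hrt; first by rewrite dimDs_lt in e.
  rewrite dimDs_ge // in e.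
  have D : (dimDs m.+1 (nnv s0) (nnv r) n)%:R = 1 :> rat by rewrite dimDs_ge ?e //; lra.
  rewrite D mulr1 -Hx1 gD_shift //; lra.
- move=> r n b; rewrite /mk (linZ (pmap_lin Hp)) gD_map // Hx2 Ev (gD_uniq HY Kv r n).
  reflexivity.
Qed.

Lemma introJ0 (X Y : pcc) (p : pchmap X Y) m (s0 : nnR) :
  is_pcc X -> is_pcc Y -> is_pmap p ->
  (forall y : obj Y s0 m, exists x : obj X s0 m, p _ _ x = y) ->
  RLP (Jmap0 m.+1 (nnv s0)) p.
Proof.
move=> HX HY Hp DS u v Hu Hv Hc.
have Eu := pmap_form dim0_le1 Hu.
have Ev := pmap_form (dimDs_le1 _ _) Hv.
have Kv := pmap_out (dimDs_le1 _ _) Hv.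
have [x Hx] := DS (G v s0 m).
exists (@mk X (dimDs m.+1 (nnv s0)) m.+1 (gD x)); split.
- exact: (pmap_in HX (dimDs_le1 _ _) (gD_ok x HX)).
- move=> r n a; rewrite /mk /Jmap0 /ones_map /= sig_mulc Eu (sig_dim0 a erefl).
  by rewrite !mul0r !scale0r.
- move=> r n b; rewrite /mk (linZ (pmap_lin Hp)) gD_map // Hx Ev (gD_uniq HY Kv r n).
  reflexivity.
Qed.

Lemma opt_some (t : option R) : t <> None -> exists tt, t = Some tt.
Proof. by case: t => [tt _|//]; exists tt. Qed.

Lemma introI (X Y : pcc) (p : pchmap X Y) m (s0 : nnR) t (t0 : nnR) :
  is_pcc X -> is_pcc Y -> is_pmap p -> tcond s0 t t0 -> ltb_ext (nnv s0) t ->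
  (forall (a : obj X s0 m.+1) (z : obj X t0 m) (b : obj Y s0 m),
     dif a = 0 -> p _ _ a = dif b ->
     (t <> None -> dif z = tr t0 a /\ p _ _ z = tr t0 b) ->
     exists w : obj X s0 m, [/\ dif w = a, p _ _ w = b & (t <> None -> tr t0 w = z)]) ->
  RLP (Imap m.+1 (nnv s0) t) p.
Proof.
move=> HX HY Hp Ht Hst DI u v Hu Hv Hc.
have aft : forall r, before (nnv r) t = false -> ~ Rlt (nnv r) (nnv t0) /\ Rlt (nnv s0) (nnv t0).
  move=> r' /before_spec [tt [Et le]]; have [-> lt] := Ht _ Et; split => //; lra.
have Eu := pmap_form (dimS_le1 _ _ _) Hu.
have Ev := pmap_form (dimDs_le1 _ _) Hv.
have Ku := pmap_out (dimS_le1 _ _ _) Hu.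
have Kv := pmap_out (dimDs_le1 _ _) Hv.
have ss : Rle (nnv s0) (nnv s0) by apply: Rle_refl.
have Ess : ~ Rlt (nnv s0) (nnv s0) by apply: Rlt_irrefl.
have bs := before_s Hst.
have DS1 : dimS m.+1 (nnv s0) t (nnv s0) m.+1 = 1%N by rewrite dimS_bef // eqxx.
have [w [Hw1 Hw2 Hw3]] : exists w : obj X s0 m,
    [/\ dif w = G u s0 m.+1, p _ _ w = G v s0 m & (t <> None -> tr t0 w = G u t0 m)].
  apply: DI.
  - case: Ku => _ K1 _; rewrite K1 // eqSS neqSn mul0r scale0r; reflexivity.
  - have E1 := Hc s0 m.+1 (const_mx 1).
    have D1 : (dimS m.+1 (nnv s0) t (nnv s0) m.+1)%:R = 1 :> rat by rewrite DS1.
    have D2 : (dimDs m.+1 (nnv s0) (nnv s0) m.+1)%:R = 1 :> rat by rewrite Dsk_m1.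
    rewrite Ev /Imap /ones_map /= sig_mulc sig_c1 D1 D2 !mul1r scale1r in E1.
    rewrite E1; case: Kv => _ K1 _; rewrite K1 ?Dsk_m // eqxx Dsk_m1 // mul1r scale1r.
    reflexivity.
  - move=> Hn; have [tt Et] := opt_some Hn.
    have [E0 Hlt] := Ht _ Et.
    have Ebt : before (nnv t0) t = false by rewrite Et -E0; apply: before_t; lra.
    have [A1 _] := aft t0 Ebt.
    have Hts : ~ Rlt (nnv t0) (nnv s0) by lra.
    have le : Rle (nnv s0) (nnv t0) by lra.
    split.
      case: Ku => _ K1 K2; rewrite (K1 t0 m); last by rewrite dimS_aft ?dimD_m.
      rewrite (K2 _ _ _ le DS1) dimS_aft ?dimD_m1 //.
      by rewrite eqxx !mul1r.
    have E1 := Hc t0 m (const_mx 1).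
    have D1 : (dimS m.+1 (nnv s0) t (nnv t0) m)%:R = 1 :> rat by rewrite dimS_aft ?dimD_m.
    have D2 : (dimDs m.+1 (nnv s0) (nnv t0) m)%:R = 1 :> rat by rewrite Dsk_m.
    rewrite Ev /Imap /ones_map /= sig_mulc sig_c1 D1 D2 !mul1r scale1r in E1.
    transitivity (G v t0 m); first exact: E1.
    case: Kv => _ _ K2; rewrite K2 ?Dsk_m //.
    by rewrite scale1r.
exists (@mk X (dimDs m.+1 (nnv s0)) m.+1 (gD w)); split.
- exact: (pmap_in HX (dimDs_le1 _ _) (gD_ok w HX)).
- move=> r n x; rewrite /mk /Imap /ones_map /= sig_mulc mulr1 Eu (gS_uniq HX Ht Hst Ku r n).
  case: (dim01 (nnv r) n (dimS_le1 m.+1 (nnv s0) t)) => e.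
    by rewrite (sig_dim0 x e) !mul0r !scale0r.
  rewrite -scalerA; congr (_ *: _).
  case: (Rlt_dec (nnv r) (nnv s0)) => Hrs; first by rewrite dimS_lt in e.
  have le : Rle (nnv s0) (nnv r) by apply: Rnot_lt_le.
  case Eb: (before (nnv r) t).
    rewrite dimS_bef // in e; have [En|nm] := eqVneq n m.+1; last by rewrite (negbTE nm) in e.
    subst n; rewrite gS_bef // castnn Dsk_m1 // scale1r gD_ge // castn_Sr castnn add0r.
    by rewrite Hw1.
  have [A1 A2] := aft r Eb.
  have [tt [Et _]] := before_spec Eb.
  rewrite dimS_aft // in e.
  rewrite gS_aft // -Hw3; last by rewrite Et.
  rewrite gD_shift //; try lra.
  by rewrite dimDs_ge ?e ?scale1r.
- move=> r n b; rewrite /mk (linZ (pmap_lin Hp)) gD_map // Hw2 Ev (gD_uniq HY Kv r n).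
  reflexivity.
Qed.

Lemma introI0 (X Y : pcc) (p : pchmap X Y) (s0 : nnR) t :
  is_pcc X -> is_pcc Y -> is_pmap p -> ltb_ext (nnv s0) t ->
  (forall a : obj X s0 0, dif a = 0 -> p _ _ a = 0 -> a = 0) ->
  RLP (Imap 0 (nnv s0) t) p.
Proof.
move=> HX HY Hp Hst KA u v Hu Hv Hc.
have Eu := pmap_form (dimS_le1 _ _ _) Hu.
have Ev := pmap_form (dimDs_le1 _ _) Hv.
have [K0 K1 K2] := pmap_out (dimS_le1 _ _ _) Hu.
have Ess : ~ Rlt (nnv s0) (nnv s0) by apply: Rlt_irrefl.
have bs := before_s Hst.
have DS1 : dimS 0 (nnv s0) t (nnv s0) 0 = 1%N by rewrite dimS_bef.
have Ha : G u s0 0 = 0.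
  apply: KA; first by rewrite K1 // mul0r scale0r.
  have E1 := Hc s0 0%N (const_mx 1).
  rewrite Ev /Imap /ones_map /= sig_mulc dimDs0 mulr0 scale0r in E1.
  exact: E1.
have Gz : forall r n, G u r n = 0.
  move=> r n; case: (dim01 (nnv r) n (dimS_le1 0 (nnv s0) t)) => e; first exact: K0.
  case: (Rlt_dec (nnv r) (nnv s0)) => Hrs; first by rewrite dimS_lt in e.
  have le : Rle (nnv s0) (nnv r) by apply: Rnot_lt_le.
  case Eb: (before (nnv r) t); last by rewrite dimS_aft in e.
  rewrite dimS_bef // in e; case: n e => [|n] // _.
  have := K2 _ _ 0%N le DS1; rewrite dimS_bef // scale1r Ha => <-.
  exact: (lin0 (pcc_trl HX le)).
exists (fun r n b => 0); split.
- exact: zero_pmap.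
- by move=> r n a; rewrite Eu Gz scaler0.
- move=> r n b; rewrite Ev (sig_dim0 b (dimDs0 _ _ _)) scale0r.
  exact: (lin0 (pmap_lin Hp)).
Qed.

Lemma cobd0 (X : pcc) r n : is_pcc X -> cobd (0 : obj X r n).
Proof. by move=> HX; case: n => [|n] //=; exists 0; exact: (lin0 (pcc_difl HX)). Qed.

Lemma tcondN s0 t0 : tcond s0 None t0.
Proof. by []. Qed.

Lemma fwd_surj (X Y : pcc) (p : pchmap X Y) :
  is_pcc X -> is_pcc Y -> is_pmap p -> RLP_I p ->
  forall s0 m (y : obj Y s0 m), exists x : obj X s0 m, p _ _ x = y.
Proof.
move=> HX HY Hp HI s0 m y.
have [w [Hw1 Hw2 _]] := elimI (m := m.+1) (t := None) (t0 := s0) (a := 0) (z := 0) (b := dif y)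
   HX HY Hp (@tcondN s0 s0) I (lin0 (pcc_difl HX)) ltac:(by rewrite (lin0 (pmap_lin Hp)) (pcc_dd HY))
   ltac:(by []) (HI m.+2 (nnv s0) None (nnle s0) I).
have [x [_ Hx _]] := elimI (m := m) (t := None) (t0 := s0) (a := w) (z := 0) (b := y)
   HX HY Hp (@tcondN s0 s0) I Hw1 Hw2 ltac:(by []) (HI m.+1 (nnv s0) None (nnle s0) I).
by exists x.
Qed.

Lemma fwd_J (X Y : pcc) (p : pchmap X Y) :
  is_pcc X -> is_pcc Y -> is_pmap p -> RLP_I p ->
  forall m (s0 t0 : nnR) (x : obj X t0 m) (y : obj Y s0 m),
  Rlt (nnv s0) (nnv t0) -> p _ _ x = tr t0 y ->
  exists x' : obj X s0 m, tr t0 x' = x /\ p _ _ x' = y.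
Proof.
move=> HX HY Hp HI m s0 t0 x y Hst Hxy.
have le : Rle (nnv s0) (nnv t0) by lra.
have Tc : tcond s0 (Some (nnv t0)) t0 by move=> tt [<-].
have [w [Hw1 Hw2 Hw3]] := elimI (m := m.+1) (t := Some (nnv t0)) (t0 := t0) (a := 0) (z := dif x) (b := dif y)
   HX HY Hp Tc Hst (lin0 (pcc_difl HX)) ltac:(by rewrite (lin0 (pmap_lin Hp)) (pcc_dd HY))
   ltac:(by split; [rewrite (pcc_dd HX) (lin0 (pcc_trl HX le)) | rewrite (pmap_dif Hp) Hxy (pcc_trd HY)])
   (HI m.+2 (nnv s0) (Some (nnv t0)) (nnle s0) Hst).
have [x' [_ Hx1 Hx2]] := elimI (m := m) (t := Some (nnv t0)) (t0 := t0) (a := w) (z := x) (b := y)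
   HX HY Hp Tc Hst Hw1 Hw2 ltac:(by split => //; rewrite Hw3)
   (HI m.+1 (nnv s0) (Some (nnv t0)) (nnle s0) Hst).
by exists x'; split => //; apply: Hx2.
Qed.

Lemma fwd_W (X Y : pcc) (p : pchmap X Y) :
  is_pcc X -> is_pcc Y -> is_pmap p -> RLP_I p -> inW p.
Proof.
move=> HX HY Hp HI r n; split.
- case: n => [|m] x Hx /=.
    move=> Hpx; exact: (elimI0 HX HY Hp Hx Hpx (HI 0%N (nnv r) None (nnle r) I)).
  move=> [y Hy].
  have [w [Hw1 _ _]] := elimI (m := m) (t := None) (t0 := r) (a := x) (z := 0) (b := y)
     HX HY Hp (@tcondN r r) I Hx (esym Hy) ltac:(by []) (HI m.+1 (nnv r) None (nnle r) I).
  by exists w.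
- move=> y Hy.
  have [w [Hw1 Hw2 _]] := elimI (m := n) (t := None) (t0 := r) (a := 0) (z := 0) (b := y)
     HX HY Hp (@tcondN r r) I (lin0 (pcc_difl HX)) ltac:(by rewrite (lin0 (pmap_lin Hp)) Hy)
     ltac:(by []) (HI n.+1 (nnv r) None (nnle r) I).
  exists w; split => //; rewrite Hw2 subrr; exact: cobd0.
Qed.

Lemma bwd_KA0 (X Y : pcc) (p : pchmap X Y) : inW p ->
  forall r (g : obj X r 0), dif g = 0 -> p _ _ g = 0 -> g = 0.
Proof. by move=> HW r g Hg Hp; have [inj _] := HW r 0%N; exact: (inj g Hg Hp). Qed.

Lemma bwd_KAS (X Y : pcc) (p : pchmap X Y) :
  is_pcc X -> is_pcc Y -> is_pmap p -> inW p ->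
  (forall r n (y : obj Y r n), exists x : obj X r n, p _ _ x = y) ->
  forall r n (g : obj X r n.+1), dif g = 0 -> p _ _ g = 0 ->
  exists f : obj X r n, dif f = g /\ p _ _ f = 0.
Proof.
move=> HX HY Hp HW Hs r n g Hg Hpg.
have [inj _] := HW r n.+1.
have [f0 Hf0] := inj g Hg ltac:(by exists 0; rewrite Hpg (lin0 (pcc_difl HY))).
have [_ sur] := HW r n.
have [c [Hc Hcb]] := sur (p _ _ f0) ltac:(by rewrite -(pmap_dif Hp) Hf0 Hpg).
have Hdl := pcc_difl HX (r := r).
clear inj sur; move: Hcb; case: n g Hg Hpg f0 Hf0 c Hc Hdl => [|n] g Hg Hpg f0 Hf0 c Hc Hdl /= Hcb.
  exists (f0 - c); split; first by rewrite (linB (Hdl _)) Hf0 Hc subr0.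
  by rewrite (linB (pmap_lin Hp)).
have [y' Hy'] := Hcb.
have [x' Hx'] := Hs r n y'.
exists (f0 - c - dif x'); split.
  by rewrite !(linB (Hdl _)) Hf0 Hc (pcc_dd HX) !subr0.
by rewrite !(linB (pmap_lin Hp)) (pmap_dif Hp) Hx' Hy' subrr.
Qed.

Lemma bwd_KK (X Y : pcc) (p : pchmap X Y) (s0 t0 : nnR) :
  is_pcc X -> is_pcc Y -> is_pmap p -> inW p ->
  (forall r n (y : obj Y r n), exists x : obj X r n, p _ _ x = y) ->
  Rlt (nnv s0) (nnv t0) ->
  (forall m (x : obj X t0 m) (y : obj Y s0 m), p _ _ x = tr t0 y ->
     exists x' : obj X s0 m, tr t0 x' = x /\ p _ _ x' = y) ->
  forall n (g : obj X s0 n.+1), dif g = 0 -> p _ _ g = 0 -> tr t0 g = 0 ->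
  exists f : obj X s0 n, [/\ dif f = g, p _ _ f = 0 & tr t0 f = 0].
Proof.
move=> HX HY Hp HW Hs Hst DJ n g Hg Hpg Htg.
have le : Rle (nnv s0) (nnv t0) by lra.
have [f1 [Hf1 Hpf1]] := bwd_KAS HX HY Hp HW Hs Hg Hpg.
have He1 : dif (tr t0 f1) = 0 by rewrite -(pcc_trd HX) // Hf1.
have He2 : p _ _ (tr t0 f1) = 0 by rewrite (pmap_tr Hp) // Hpf1 (lin0 (pcc_trl HY le)).
move: He1 He2; case: n g Hg Hpg Htg f1 Hf1 Hpf1 => [|n] g Hg Hpg Htg f1 Hf1 Hpf1 He1 He2.
  by exists f1; split => //; exact: (bwd_KA0 HW He1 He2).
have [e0 [He0 Hpe0]] := bwd_KAS HX HY Hp HW Hs He1 He2.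
have [e' [He'1 He'2]] := DJ n e0 0 ltac:(by rewrite Hpe0 (lin0 (pcc_trl HY le))).
exists (f1 - dif e'); split.
- by rewrite (linB (pcc_difl HX)) (pcc_dd HX) subr0.
- by rewrite (linB (pmap_lin Hp)) (pmap_dif Hp) He'2 (lin0 (pcc_difl HY)) Hpf1 subr0.
- by rewrite (linB (pcc_trl HX le)) (pcc_trd HX) // He'1 He0 subrr.
Qed.

Lemma bwd_I (X Y : pcc) (p : pchmap X Y) :
  is_pcc X -> is_pcc Y -> is_pmap p -> RLP_J p -> inW p -> RLP_I p.
Proof.
move=> HX HY Hp [HJ HJ0] HW k s t Hs Hst.
pose s0 : nnR := exist _ s Hs.
have Hs' : forall r n (y : obj Y r n), exists x : obj X r n, p _ _ x = y.
  move=> r n y; exact: (@elimJ0 X Y p n r y HX HY Hp (HJ0 n.+1 (nnv r) (nnle r))).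
have DJ : forall (t0 : nnR), Rlt (nnv s0) (nnv t0) ->
   forall m (x : obj X t0 m) (y : obj Y s0 m), p _ _ x = tr t0 y ->
     exists x' : obj X s0 m, tr t0 x' = x /\ p _ _ x' = y.
  move=> t0 lt m x y Hxy; exact: (elimJ HX HY Hp lt Hxy (HJ m.+1 (nnv s0) (nnv t0) Hs lt)).
case: k => [|m].
  apply: (introI0 (s0 := s0)) => //; exact: bwd_KA0.
case: t Hst => [tt|] Hst.
  have Htt : Rle 0 tt by simpl in Hst; lra.
  pose t0 : nnR := exist _ tt Htt.
  have Tc : tcond s0 (Some tt) t0 by move=> t1 [<-].
  have lt : Rlt (nnv s0) (nnv t0) by [].
  have le : Rle (nnv s0) (nnv t0) by simpl in *; lra.
  apply: (introI (s0 := s0) (t0 := t0)) => // a z b Ha Hab Hz.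
  have [Hz1 Hz2] := Hz ltac:(by []).
  have [w' [Hw'1 Hw'2]] := DJ t0 lt m z b Hz2.
  have [f [Hf1 Hf2 Hf3]] := bwd_KK HX HY Hp HW Hs' lt (DJ t0 lt) (g := dif w' - a)
     ltac:(by rewrite (linB (pcc_difl HX)) (pcc_dd HX) Ha subrr)
     ltac:(by rewrite (linB (pmap_lin Hp)) (pmap_dif Hp) Hw'2 Hab subrr)
     ltac:(by rewrite (linB (pcc_trl HX le)) (pcc_trd HX) // Hw'1 Hz1 subrr).
  exists (w' - f); split.
  - by rewrite (linB (pcc_difl HX)) Hf1 opprB addrC subrK.
  - by rewrite (linB (pmap_lin Hp)) Hw'2 Hf2 subr0.
  - by move=> _; rewrite (linB (pcc_trl HX le)) Hw'1 Hf3 subr0.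
apply: (introI (s0 := s0) (t0 := s0)) => // a z b Ha Hab Hz.
have [w' Hw'] := Hs' s0 m b.
have [f [Hf1 Hf2]] := bwd_KAS HX HY Hp HW Hs' (g := dif w' - a)
   ltac:(by rewrite (linB (pcc_difl HX)) (pcc_dd HX) Ha subrr)
   ltac:(by rewrite (linB (pmap_lin Hp)) (pmap_dif Hp) Hw' Hab subrr).
exists (w' - f); split => //.
- by rewrite (linB (pcc_difl HX)) Hf1 opprB addrC subrK.
- by rewrite (linB (pmap_lin Hp)) Hw' Hf2 subr0.
Qed.

Lemma fwd_RLPJ (X Y : pcc) (p : pchmap X Y) :
  is_pcc X -> is_pcc Y -> is_pmap p -> RLP_I p -> RLP_J p.
Proof.
move=> HX HY Hp HI; split.
- move=> [|m] s t Hs Hst.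
    by apply: introZero => // r n; exact: dimDs0.
  have Ht : Rle 0 t by lra.
  pose s0 : nnR := exist _ s Hs; pose t0 : nnR := exist _ t Ht.
  apply: (introJ (s0 := s0) (t0 := t0)) => // x y Hxy.
  exact: (fwd_J HX HY Hp HI).
- move=> [|m] s Hs.
    by apply: introZero => // r n; exact: dimDs0.
  pose s0 : nnR := exist _ s Hs.
  apply: (introJ0 (s0 := s0)) => // y.
  exact: (fwd_surj HX HY Hp HI).
Qed.

Theorem mainTheorem12 (X Y : pcc) (p : pchmap X Y) :
  is_pcc X -> is_pcc Y -> is_pmap p ->
  (RLP_I p <-> RLP_J p /\ inW p).
Proof.
move=> HX HY Hp; split.
- move=> HI; split; [exact: fwd_RLPJ | exact: fwd_W].
- by move=> [HJ HW]; exact: bwd_I.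
Qed.
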